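(* Let $\mathcal{F}(X)\subseteq\Psi$ with admissible topology $\Delta$, and suppose there is a base $\beta$ for the topology of $X$ with $U^+=\{A\in\Psi:A\subseteq U\}\in\Delta$ for every $U\in\beta$. Then $(X,\mathbb{F})$ is weakly mixing of all orders if and only if $(\Psi,\overline{\mathbb{F}})$ is weakly mixing of all orders.
   Context: $(X,d)$ compact metric, $\mathbb{F}=(f_n)$ continuous self-maps, $\omega_n=f_n\circ\cdots\circ f_1$. Weak mixing of order $k$: for any non-empty open $U_1,\dots,U_k,V_1,\dots,V_k$ there is $n$ with $\omega_n(U_i)\cap V_i\neq\emptyset$ for all $i$. $\mathcal{F}(X)$: non-empty finite subsets; $\Psi\subseteq\mathcal{K}(X)$ invariant under all $\omega_k$; induced system $\overline{\omega}_k(A)=\omega_k(A)$, notions defined analogously on $(\Psi,\Delta)$. Admissible topology: hit-and-miss or hit-and-far-miss type topology with $x\mapsto\{x\}$ continuous, generated by $U^-=\{A:A\cap U\neq\emptyset\}$ and miss sets $(E^c)^+$ or $(E^c)^{++}$ for $E$ in a fixed family of closed sets; induced maps continuous. *)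

(* Defs.v *)
From Stdlib Require Import Reals List.
Open Scope R_scope.
Set Implicit Arguments.

Section Defs.
Variable X : Type.
Variable d : X -> X -> R.

Definition is_metric : Prop :=
  (forall x y, 0 <= d x y) /\ (forall x y, d x y = 0 <-> x = y) /\
  (forall x y, d x y = d y x) /\ (forall x y z, d x z <= d x y + d y z).

Definition open (U : X -> Prop) : Prop :=
  forall x, U x -> exists r, 0 < r /\ forall y, d x y < r -> U y.
Definition closed (E : X -> Prop) : Prop := open (fun x => ~ E x).

Definition compact_set (K : X -> Prop) : Prop :=
  forall C : (X -> Prop) -> Prop,
    (forall U, C U -> open U) ->
    (forall x, K x -> exists U, C U /\ U x) ->
    exists l : list (X -> Prop),
      (forall U, In U l -> C U) /\ (forall x, K x -> exists U, In U l /\ U x).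
Definition compact_space : Prop := compact_set (fun _ => True).

Definition continuous (g : X -> X) : Prop :=
  forall x eps, 0 < eps -> exists delta, 0 < delta /\
    forall y, d x y < delta -> d (g x) (g y) < eps.

Definition fin_nonempty (A : X -> Prop) : Prop :=
  exists l : list X, l <> nil /\ forall x, A x <-> In x l.

Definition hit (U : X -> Prop) (A : X -> Prop) : Prop := exists x, A x /\ U x.
Definition miss (U : X -> Prop) (A : X -> Prop) : Prop := forall x, A x -> U x.
Definition farmiss (U : X -> Prop) (A : X -> Prop) : Prop :=
  exists eps, 0 < eps /\ forall a y, A a -> d a y < eps -> U y.

(* subbase of an admissible topology on Psi: hit sets U^- (U open) and miss
   sets (E^c)^+ (far = false) or far-miss sets (E^c)^{++} (far = true),
   E ranging over the fixed family Efam of closed sets. *)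
Definition adm_subbase (Psi : (X -> Prop) -> Prop) (Efam : (X -> Prop) -> Prop)
  (far : bool) (S : (X -> Prop) -> Prop) : Prop :=
  (exists U, open U /\ forall A, S A <-> (Psi A /\ hit U A)) \/
  (exists E, Efam E /\ forall A, S A <->
     (Psi A /\ (if far then farmiss (fun x => ~ E x) A
                       else miss (fun x => ~ E x) A))).

Definition gen_open (Psi : (X -> Prop) -> Prop)
  (Sub : ((X -> Prop) -> Prop) -> Prop) (W : (X -> Prop) -> Prop) : Prop :=
  (forall A, W A -> Psi A) /\
  forall A, W A -> exists l : list ((X -> Prop) -> Prop),
    (forall S, In S l -> Sub S /\ S A) /\
    (forall B, Psi B -> (forall S, In S l -> S B) -> W B).

Definition Delta_open (Psi : (X -> Prop) -> Prop) (Efam : (X -> Prop) -> Prop)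
  (far : bool) : ((X -> Prop) -> Prop) -> Prop :=
  gen_open Psi (adm_subbase Psi Efam far).

End Defs.

(* omega f n = f (n-1) o ... o f 0 ; paper's f_i is f (i-1), omega f 0 = id *)
Fixpoint omega (X : Type) (f : nat -> X -> X) (n : nat) : X -> X :=
  match n with
  | O => fun x => x
  | S m => fun x => f m (omega f m x)
  end.

Definition image (X : Type) (g : X -> X) (A : X -> Prop) : X -> Prop :=
  fun y => exists x, A x /\ y = g x.

Definition weakly_mixing_order (T : Type) (isopen : (T -> Prop) -> Prop)
  (g : nat -> T -> T) (k : nat) : Prop :=
  forall U V : nat -> T -> Prop,
    (forall i, (i < k)%nat ->
       isopen (U i) /\ (exists x, U i x) /\ isopen (V i) /\ (exists y, V i y)) ->
    exists n, (1 <= n)%nat /\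
      forall i, (i < k)%nat -> exists x, U i x /\ V i (g n x).

Definition weakly_mixing_all (T : Type) (isopen : (T -> Prop) -> Prop)
  (g : nat -> T -> T) : Prop :=
  forall k, (1 <= k)%nat -> weakly_mixing_order isopen g k.

(* Main.v *)
Require Import Defs.
From Stdlib Require Import Reals List Lra Lia IndefiniteDescription Classical.
Open Scope R_scope.

Lemma choice_nat {T} (t0:T) (k:nat) (P: nat -> T -> Prop) :
  (forall i, (i<k)%nat -> exists t, P i t) -> exists h : nat -> T, forall i, (i<k)%nat -> P i (h i).
Proof.
  intros H.
  assert (ex : forall i, exists t, (i<k)%nat -> P i t).
  { intros i. destruct (Nat.lt_ge_cases i k) as [Hi|Hi].
    - destruct (H i Hi) as [t Ht]; exists t; auto.
    - exists t0; intros; lia. }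
  exists (fun i => proj1_sig (constructive_indefinite_description _ (ex i))).
  intros i Hi. exact (proj2_sig (constructive_indefinite_description _ (ex i)) Hi).
Qed.

Lemma common_r {T} (P : T -> R -> Prop) :
  (forall t r r', P t r -> 0 < r' -> r' <= r -> P t r') ->
  forall L, (forall t, In t L -> exists r, 0<r /\ P t r) ->
  exists r, 0<r /\ forall t, In t L -> P t r.
Proof.
  intros Hd L. induction L as [|t L IH]; intros H.
  - exists 1; split; [lra| intros t []].
  - destruct (H t (or_introl eq_refl)) as [r1 [H1 H1']].
    destruct IH as [r2 [H2 H2']]. { intros u Hu; apply H; right; auto. }
    exists (Rmin r1 r2); split. { apply Rmin_pos; auto. }
    intros u [<-|Hu].
    + apply Hd with r1; auto. apply Rmin_pos; auto. apply Rmin_l.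
    + apply Hd with r2; auto. apply Rmin_pos; auto. apply Rmin_r.
Qed.

Lemma ball_open (X:Type) (d : X -> X -> R) : is_metric d -> forall a r, open d (fun y => d a y < r).
Proof.
  intros [_ [_ [_ Htr]]] a r x Hx. exists (r - d a x); split; [lra|].
  intros y Hy. specialize (Htr a x y). lra.
Qed.

Lemma ball_center (X:Type) (d : X -> X -> R) : is_metric d -> forall a, d a a = 0.
Proof. intros [_ [H _]] a. apply H; auto. Qed.

Definition Qs (X:Type) (d : X -> X -> R) (Psi : (X -> Prop) -> Prop) (S : (X->Prop) -> Prop)
  (F : list X) (r : R) : Prop :=
  forall r', 0 < r' -> r' <= r -> forall B, Psi B ->
    (forall x, B x -> exists a, In a F /\ d a x < r') ->
    (forall a, In a F -> exists x, B x /\ d a x < r') -> S B.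

Lemma per_S (X:Type) (d : X -> X -> R) Psi Efam (far:bool) :
  is_metric d -> (forall A, Psi A -> exists x, A x) -> (forall E, Efam E -> closed d E) ->
  forall S A, adm_subbase d Psi Efam far S -> S A ->
  exists a0, A a0 /\ forall F, In a0 F -> (forall a, In a F -> A a) ->
    exists r, 0 < r /\ @Qs X d Psi S F r.
Proof.
  intros Hm Hne Hcl S A [[U [HU HS]] | [E [HE HS]]] HSA.
  - apply HS in HSA. destruct HSA as [_ [a0 [Aa0 Ua0]]].
    destruct (HU a0 Ua0) as [r0 [Hr0 Hb]].
    exists a0; split; auto. intros F HF _. exists r0; split; auto.
    intros r' Hr' Hr'r B HB _ Hmeet. apply HS; split; auto.
    destruct (Hmeet a0 HF) as [x [Bx Hx]]. exists x; split; auto. apply Hb; lra.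
  - pose proof (proj1 (HS A) HSA) as [HPA Hmi].
    destruct (Hne A HPA) as [a0 Aa0]. exists a0; split; auto.
    intros F _ HFA. destruct far.
    + destruct Hmi as [eps [Heps Hfm]].
      exists (eps/2); split; [lra|].
      intros r' Hr' Hr'r B HB Hcov _. apply HS; split; auto.
      exists (eps/2); split; [lra|]. intros b y Bb Hby.
      destruct (Hcov b Bb) as [a [Fa Hab]].
      apply Hfm with a; auto. destruct Hm as [_ [_ [_ Htr]]].
      specialize (Htr a b y). lra.
    + destruct (common_r (fun a r => forall y, d a y < r -> ~ E y)) with (L := F)
        as [r [Hr HP]].
      * intros t r r' H _ H2 y Hy. apply H. lra.
      * intros a Fa. apply (Hcl E HE). apply Hmi. apply HFA; auto.
      * exists r; split; auto.
        intros r' Hr' Hr'r B HB Hcov _. apply HS; split; auto.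
        intros x Bx. destruct (Hcov x Bx) as [a [Fa Hax]].
        apply (HP a Fa). lra.
Qed.

Definition Approx (X:Type) (d : X -> X -> R) (Psi : (X -> Prop) -> Prop)
  (W : (X -> Prop) -> Prop) (p : list X * R) : Prop :=
  fst p <> nil /\ 0 < snd p /\ forall B, Psi B ->
    (forall x, B x -> exists a, In a (fst p) /\ d a x < snd p) ->
    (forall a, In a (fst p) -> exists x, B x /\ d a x < snd p) -> W B.

Lemma key (X:Type) (d : X -> X -> R) Psi Efam (far:bool) :
  is_metric d -> (forall A, Psi A -> exists x, A x) -> (forall E, Efam E -> closed d E) ->
  forall W, Delta_open d Psi Efam far W -> forall A, W A -> exists p, @Approx X d Psi W p.
Proof.
  intros Hm Hne Hcl W [HWP HW] A WA.
  destruct (HW A WA) as [l [Hl Hsub]].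
  assert (comb : exists F0, (forall a, In a F0 -> A a) /\ forall S, In S l ->
     forall F, incl F0 F -> (forall a, In a F -> A a) -> exists r, 0 < r /\ @Qs X d Psi S F r).
  { clear Hsub. induction l as [|S l IH].
    - exists nil; split; [intros a []| intros S []].
    - destruct (Hl S (or_introl eq_refl)) as [HS HSA].
      destruct (@per_S X d Psi Efam far Hm Hne Hcl S A HS HSA) as [a0 [Aa0 Ha0]].
      destruct IH as [F0 [HF0 HF0']]. { intros T HT; apply Hl; right; auto. }
      exists (a0 :: F0); split.
      + intros a [<-|Ha]; auto.
      + intros T [<-|HT] F Hinc HFA.
        * apply Ha0; auto. apply Hinc; left; auto.
        * apply HF0'; auto. intros a Ha; apply Hinc; right; auto. }
  destruct comb as [F0 [HF0 HF0']].
  destruct (Hne A (HWP A WA)) as [a Aa].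
  set (F := a :: F0).
  assert (HFA : forall b, In b F -> A b). { intros b [<-|Hb]; auto. }
  destruct (common_r (fun S r => @Qs X d Psi S F r)) with (L := l) as [r [Hr HQ]].
  - intros t r r' H H1 H2 r'' H3 H4. apply H; auto; lra.
  - intros S HS. apply HF0'; auto. intros b Hb; right; auto.
  - exists (F, r). split; [discriminate|]. split; auto.
    intros B HB Hcov Hmeet. apply Hsub; auto.
    intros S HS. apply (HQ S HS r); auto; lra.
Qed.

Lemma wm_list (X:Type) (d : X -> X -> R) (f : nat -> X -> X) :
  weakly_mixing_all (open d) (omega f) ->
  forall L : list ((X->Prop)*(X->Prop)),
  (forall p, In p L -> open d (fst p) /\ (exists x, fst p x) /\ open d (snd p) /\ (exists y, snd p y)) ->
  exists n, (1 <= n)%nat /\ forall p, In p L -> exists x, fst p x /\ snd p (omega f n x).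
Proof.
  intros Hwm L HL. destruct L as [|p0 L'] eqn:EL.
  - exists 1%nat; split; [lia| intros p []].
  - rewrite <- EL in *.
    destruct (Hwm (length L)) with (U := fun i => fst (nth i L p0)) (V := fun i => snd (nth i L p0))
      as [n [Hn Hx]].
    + subst L; simpl; lia.
    + intros i Hi. apply HL. apply nth_In; auto.
    + exists n; split; auto. intros p Hp.
      destruct (In_nth L p p0 Hp) as [i [Hi <-]]. apply Hx; auto.
Qed.

Lemma extract (X:Type) (g : X -> X) (L : list ((X->Prop)*(X->Prop))) :
  (forall p, In p L -> exists x, fst p x /\ snd p (g x)) ->
  exists xs, (forall p, In p L -> exists x, In x xs /\ fst p x /\ snd p (g x)) /\
             (forall x, In x xs -> exists p, In p L /\ fst p x /\ snd p (g x)).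
Proof.
  induction L as [|p L IH]; intros H.
  - exists nil; split; [intros p []| intros x []].
  - destruct (H p (or_introl eq_refl)) as [x0 Hx0].
    destruct IH as [xs [H1 H2]]. { intros q Hq; apply H; right; auto. }
    exists (x0 :: xs); split.
    + intros q [<-|Hq]. * exists x0; split; [left|]; auto.
      * destruct (H1 q Hq) as [x [? ?]]; exists x; split; [right|]; auto.
    + intros x [<-|Hx]. * exists p; split; [left|]; auto.
      * destruct (H2 x Hx) as [q [? ?]]; exists q; split; [right|]; auto.
Qed.

Theorem mainTheorem5 (X : Type) (d : X -> X -> R) (f : nat -> X -> X)
  (Psi : (X -> Prop) -> Prop) (Efam : (X -> Prop) -> Prop) (far : bool) :
  is_metric d ->
  compact_space d ->
  (forall n, continuous d (f n)) ->
  (* Psi is a family of non-empty compact sets containing F(X) *)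
  (forall A, Psi A -> (exists x, A x) /\ compact_set d A) ->
  (forall A, fin_nonempty A -> Psi A) ->
  (* Psi invariant under all omega_k *)
  (forall k A, Psi A -> Psi (image (omega f k) A)) ->
  (* admissibility of Delta *)
  (forall E, Efam E -> closed d E) ->
  (forall W, Delta_open d Psi Efam far W -> open d (fun x => W (fun y => y = x))) ->
  (forall k W, Delta_open d Psi Efam far W ->
     Delta_open d Psi Efam far (fun A => Psi A /\ W (image (omega f k) A))) ->
  (* a base beta of X with U^+ in Delta for U in beta *)
  (exists beta : (X -> Prop) -> Prop,
     (forall U, beta U -> open d U) /\
     (forall O x, open d O -> O x -> exists U, beta U /\ U x /\ forall y, U y -> O y) /\
     (forall U, beta U -> Delta_open d Psi Efam far (fun A => Psi A /\ miss U A))) ->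
  (weakly_mixing_all (open d) (omega f) <->
   weakly_mixing_all (Delta_open d Psi Efam far) (fun n => image (omega f n))).
Proof.
  intros Hm _ _ HPsi Hfin Hinv Hcl _ _ [beta [Hbo [Hbase Hbplus]]].
  assert (Hne : forall A, Psi A -> exists x, A x) by (intros A HA; apply HPsi; auto).
  split.
  - intros Hwm k Hk U V HUV.
    destruct (@choice_nat (list X * R) (nil, 0) k (fun i p => @Approx X d Psi (U i) p)) as [hU HhU].
    { intros i Hi. destruct (HUV i Hi) as [HU [[A HA] _]].
      exact (@key X d Psi Efam far Hm Hne Hcl (U i) HU A HA). }
    destruct (@choice_nat (list X * R) (nil, 0) k (fun i p => @Approx X d Psi (V i) p)) as [hV HhV].
    { intros i Hi. destruct (HUV i Hi) as [_ [_ [HV [A HA]]]].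
      exact (@key X d Psi Efam far Hm Hne Hcl (V i) HV A HA). }
    set (Li := fun i => map (fun ac : X * X => ((fun y => d (fst ac) y < snd (hU i)),
                                   (fun y => d (snd ac) y < snd (hV i))))
                       (list_prod (fst (hU i)) (fst (hV i)))).
    destruct (@wm_list X d f Hwm (flat_map Li (seq 0 k))) as [n [Hn Hpts]].
    { intros p Hp. apply in_flat_map in Hp as [i [Hi Hp]].
      apply in_seq in Hi. unfold Li in Hp. apply in_map_iff in Hp as [[a c] [<- Hac]].
      simpl. destruct (HhU i ltac:(lia)) as [_ [Hr _]]. destruct (HhV i ltac:(lia)) as [_ [Hs _]].
      split; [apply ball_open; auto|]. split; [exists a; rewrite ball_center; auto|].
      split; [apply ball_open; auto|]. exists c; rewrite ball_center; auto. }
    exists n; split; auto. intros i Hi.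
    destruct (@extract X (omega f n) (Li i)) as [xs [H1 H2]].
    { intros p Hp. apply Hpts. apply in_flat_map. exists i; split; auto. apply in_seq; lia. }
    destruct (HhU i Hi) as [HFne [Hr HUa]]. destruct (HhV i Hi) as [HGne [Hs HVa]].
    assert (Hpair : forall a c, In a (fst (hU i)) -> In c (fst (hV i)) ->
              exists x, In x xs /\ d a x < snd (hU i) /\ d c (omega f n x) < snd (hV i)).
    { intros a c Ha Hc.
      refine (H1 ((fun y => d a y < snd (hU i)), (fun y => d c y < snd (hV i))) _).
      unfold Li. apply in_map_iff. exists (a, c); split; auto. apply in_prod; auto. }
    assert (Hpt : forall x, In x xs -> exists a c, In a (fst (hU i)) /\ In c (fst (hV i)) /\
              d a x < snd (hU i) /\ d c (omega f n x) < snd (hV i)).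
    { intros x Hx. destruct (H2 x Hx) as [p [Hp Hpx]]. unfold Li in Hp.
      apply in_map_iff in Hp as [[a c] [<- Hac]]. apply in_prod_iff in Hac.
      exists a, c; simpl in *; tauto. }
    destruct (fst (hU i)) as [|a0 Fr] eqn:EF; [congruence|].
    destruct (fst (hV i)) as [|c0 Gr] eqn:EG; [congruence|].
    assert (Hxs : xs <> nil).
    { destruct (Hpair a0 c0 (or_introl eq_refl) (or_introl eq_refl)) as [x [Hx _]].
      intros E; rewrite E in Hx; destruct Hx. }
    assert (HB : Psi (fun x => In x xs)). { apply Hfin. exists xs; split; auto; tauto. }
    exists (fun x => In x xs). split.
    + apply HUa; auto.
      * intros x Hx. destruct (Hpt x Hx) as [a [c [Ha [_ [Hax _]]]]]. exists a; auto.
      * intros a Ha. destruct (Hpair a c0 Ha (or_introl eq_refl)) as [x [? [? _]]].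
        exists x; auto.
    + apply HVa; auto.
      * intros y [x [Hx ->]]. destruct (Hpt x Hx) as [a [c [_ [Hc [_ Hcx]]]]]. exists c; auto.
      * intros c Hc. destruct (Hpair a0 c (or_introl eq_refl) Hc) as [x [? [_ ?]]].
        exists (omega f n x); split; auto. exists x; auto.
  - intros Hwm k Hk U V HUV.
    destruct (@choice_nat ((X -> Prop) * (X -> Prop)) ((fun _ => True), (fun _ => True)) k
      (fun i p => beta (fst p) /\ beta (snd p) /\ (exists x, fst p x) /\ (exists y, snd p y) /\
          (forall y, fst p y -> U i y) /\ (forall y, snd p y -> V i y))) as [h Hh].
    { intros i Hi. destruct (HUV i Hi) as [HU [[x Ux] [HV [y Vy]]]].
      destruct (Hbase _ _ HU Ux) as [B1 [? [? ?]]]. destruct (Hbase _ _ HV Vy) as [B2 [? [? ?]]].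
      exists (B1, B2); simpl; repeat split; eauto. }
    destruct (Hwm k Hk (fun i A => Psi A /\ miss (fst (h i)) A) (fun i A => Psi A /\ miss (snd (h i)) A))
      as [n [Hn Hx]].
    { intros i Hi. destruct (Hh i Hi) as [B1 [B2 [[x Hx] [[y Hy] _]]]].
      split; [apply Hbplus; auto|]. split.
      { exists (fun z => z = x). split; [apply Hfin; exists (x :: nil); split; [discriminate|]; simpl; intuition|].
        intros z ->; auto. }
      split; [apply Hbplus; auto|].
      exists (fun z => z = y). split; [apply Hfin; exists (y :: nil); split; [discriminate|]; simpl; intuition|].
      intros z ->; auto. }
    exists n; split; auto. intros i Hi.
    destruct (Hx i Hi) as [A [[HA HmA] [_ HmI]]].
    destruct (Hne A HA) as [a Aa]. destruct (Hh i Hi) as [_ [_ [_ [_ [HU HV]]]]].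
    exists a; split; [apply HU, HmA; auto|]. apply HV, HmI. exists a; auto.
Qed.
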